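(* Let $d\ge 1$, let $(\mathbb{E},\mathcal{E})$ be a measurable space, let $\Phi:\mathbb{R}^d\times\mathbb{E}\to\mathbb{R}^d$ be measurable and let $\varepsilon_1$ be a random element of $\mathbb{E}$. Assume the following condition holds: there exists a measurable map $\phi:\mathbb{S}^{d-1}\times\mathbb{E}\to\mathbb{R}^d$ such that for all $e\in\mathbb{E}$, $\lim_{x\to\infty}x^{-1}\Phi(x s(x),e)=\phi(s,e)$ whenever $s(x)\to s$ in $\mathbb{S}^{d-1}$; and moreover, if $\Pr(\phi(s,\varepsilon_1)=0)>0$ for some $s\in\mathbb{S}^{d-1}$, then $\Pr(\varepsilon_1\in\mathbb{W})=1$ for a measurable set $\mathbb{W}\subset\mathbb{E}$ such that for all $e\in\mathbb{W}$, $\sup_{\|y\|\le x}\|\Phi(y,e)\|=O(x)$ as $x\to\infty$. Extend $\phi$ to $\mathbb{R}^d\times\mathbb{E}$ by $\phi(v,e)=\|v\|\,\phi(v/\|v\|,e)$ for $v\neq 0$ and $\phi(0,e)=0$. Then $\lim_{x\to\infty}x^{-1}\Phi(x v(x),e)=\phi(v,e)$ whenever $v(x)\to v\in\mathbb{R}^d\setminus\{0\}$ and $e\in\mathbb{E}$. If $\Pr(\phi(s,\varepsilon_1)=0)>0$ for some $s\in\mathbb{S}^{d-1}$, then this limit relation also holds for $v(x)\to v=0$ and $e\in\mathbb{W}$.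
   Context: $\|\cdot\|$ denotes the Euclidean norm on $\mathbb{R}^d$ and $\mathbb{S}^{d-1}=\{x\in\mathbb{R}^d:\|x\|=1\}$. *)

(* Defs.v *)
From HB Require Import structures.
From mathcomp Require Import all_boot all_order all_algebra.
From mathcomp Require Import all_classical all_reals all_analysis.
Set Implicit Arguments. Unset Strict Implicit. Unset Printing Implicit Defensive.
Import Order.TTheory GRing.Theory Num.Theory.
Import numFieldNormedType.Exports.
Local Open Scope classical_set_scope.
Local Open Scope ring_scope.

(* R^d is represented by row vectors 'rV[R]_d (with their standard topology). *)

Definition enorm (R : realType) (d : nat) (v : 'rV[R]_d) : R :=
  Num.sqrt (\sum_(i < d) v 0 i ^+ 2).

Definition sphere (R : realType) (d : nat) : set 'rV[R]_d :=
  [set v | enorm v = 1].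

(* Borel sigma-algebra on R^d: transported from the product sigma-algebra
   on d.-tuple R (which coincides with the Borel sigma-algebra of R^d). *)
Definition rv_to_tuple (R : realType) (d : nat) (v : 'rV[R]_d) : d.-tuple R :=
  [tuple v 0 i | i < d].
Definition tuple_to_rv (R : realType) (d : nat) (t : d.-tuple R) : 'rV[R]_d :=
  \row_(i < d) tnth t i.

Definition measurable_Rd_fun (R : realType) (d : nat) (dE : measure_display)
  (E : measurableType dE) (D : set ('rV[R]_d * E)) (f : 'rV[R]_d * E -> 'rV[R]_d) :=
  measurable_fun ((fun p : d.-tuple R * E => (tuple_to_rv p.1, p.2)) @^-1` D)
    (fun p : d.-tuple R * E => rv_to_tuple (f (tuple_to_rv p.1, p.2))).

Definition phi_ext (R : realType) (d : nat) (E : Type)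
  (phi : 'rV[R]_d * E -> 'rV[R]_d) (v : 'rV[R]_d) (e : E) : 'rV[R]_d :=
  if v == 0 then 0 else enorm v *: phi ((enorm v)^-1 *: v, e).

(* Main.v *)
Require Import Defs.
From HB Require Import structures.
From mathcomp Require Import all_boot all_order all_algebra.
From mathcomp Require Import all_classical all_reals all_analysis.
From mathcomp Require Import lra.
Import Order.TTheory GRing.Theory Num.Theory.
Import numFieldNormedType.Exports.
Local Open Scope classical_set_scope.
Local Open Scope ring_scope.

Section enorm_facts.
Variables (R : realType) (d : nat).
Implicit Types (v w : 'rV[R]_d).

Lemma enorm_ge0 v : 0 <= enorm v.
Proof. exact: sqrtr_ge0. Qed.

Lemma enormZ (a : R) v : enorm (a *: v) = `|a| * enorm v.
Proof.
rewrite /enorm; under eq_bigr => i _ do rewrite mxE exprMn.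
by rewrite -mulr_sumr sqrtrM ?sqr_ge0 // sqrtr_sqr.
Qed.

Lemma coord_le_enorm v i : `|v 0 i| <= enorm v.
Proof.
rewrite -sqrtr_sqr; apply: ler_wsqrtr.
rewrite (bigD1 i) //= lerDl; apply: sumr_ge0 => j _; exact: sqr_ge0.
Qed.

Lemma coord_le_norm v i : `|v 0 i| <= `|v|.
Proof.
rewrite [leRHS]/Num.Def.normr /= mx_normrE.
by apply/bigmax_geP; right; exists (0, i).
Qed.

Lemma norm_le_enorm v : `|v| <= enorm v.
Proof.
rewrite [leLHS]/Num.Def.normr /= mx_normrE; apply: bigmax_le => [|[a j] _].
  exact: enorm_ge0.
by rewrite /= (ord1 a); exact: coord_le_enorm.
Qed.

Lemma enorm_le_norm v : enorm v <= d%:R * `|v|.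
Proof.
rewrite -[leRHS]ger0_norm ?mulr_ge0 // -sqrtr_sqr; apply: ler_wsqrtr.
apply: (@le_trans _ _ (\sum_(i < d) `|v|^+2)).
  apply: ler_sum => i _; rewrite -real_normK ?num_real //.
  by apply: lerXn2r; rewrite ?nnegrE // coord_le_norm.
rewrite sumr_const card_ord exprMn mulrC -[leLHS]mulr_natr; apply: ler_wpM2l; first exact: sqr_ge0.
by rewrite -natrX ler_nat; case: d => // n; rewrite expnS leq_pmulr.
Qed.

Lemma enorm_eq0 v : enorm v = 0 -> v = 0.
Proof.
move=> h; apply/eqP; rewrite -normr_eq0 eq_le normr_ge0 andbT.
by rewrite -h norm_le_enorm.
Qed.

Lemma coord_cvg {T : Type} {F : set_system T} {FF : Filter F}
    (f : T -> 'rV[R]_d) v i :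
  f @ F --> v -> (fun t => f t 0 i) @ F --> v 0 i.
Proof.
move=> /cvgrPdist_lt h; apply/cvgrPdist_lt => e e0.
apply: filterS (h e e0) => t; apply: le_lt_trans.
by have := coord_le_norm (v - f t) i; rewrite !mxE.
Qed.

Lemma enorm_cvg {T : Type} {F : set_system T} {FF : Filter F}
    (f : T -> 'rV[R]_d) v :
  f @ F --> v -> (fun t => enorm (f t)) @ F --> enorm v.
Proof.
move=> hf.
have hs : forall r : seq 'I_d, (fun t => \sum_(i <- r) f t 0 i ^+ 2) @ F -->
    \sum_(i <- r) v 0 i ^+ 2.
  elim => [|i r IH].
    under eq_fun do rewrite big_nil; rewrite big_nil; exact: cvg_cst.
  under eq_fun do rewrite big_cons; rewrite big_cons.
  apply: cvgD => //; rewrite expr2.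
  under eq_fun do rewrite expr2.
  by apply: cvgM; exact: coord_cvg.
exact: (continuous_cvg _ (@sqrt_continuous R _)) (hs _).
Qed.

End enorm_facts.
Arguments enorm_ge0 {R d}.
Arguments enormZ {R d}.
Arguments coord_le_enorm {R d}.
Arguments coord_le_norm {R d}.
Arguments norm_le_enorm {R d}.
Arguments enorm_le_norm {R d}.
Arguments enorm_eq0 {R d v}.
Arguments enorm_cvg {R d T F FF f v}.

Lemma unif (R : realType) (d : nat) (G : 'rV[R]_d -> 'rV[R]_d) (p0 s0 : 'rV[R]_d) :
  (forall s : R -> 'rV[R]_d, (forall x, @sphere R d (s x)) ->
     s x @[x --> +oo] --> s0 -> (x^-1 *: G (x *: s x)) @[x --> +oo] --> p0) ->
  @sphere R d s0 ->
  forall eps : R, 0 < eps -> exists M dl : R, 0 < dl /\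
    forall y s, M < y -> @sphere R d s -> `|s - s0| < dl ->
      `|p0 - y^-1 *: G (y *: s)| < eps.
Proof.
move=> H hs0 eps eps0; apply: contrapT => nU.
have Hn : forall n : nat, exists ys : R * 'rV[R]_d, n%:R < ys.1 /\
    @sphere R d ys.2 /\ `|ys.2 - s0| < n.+1%:R^-1 /\
    eps <= `|p0 - ys.1^-1 *: G (ys.1 *: ys.2)|.
  move=> n; apply: contrapT => hn; apply: nU; exists n%:R, n.+1%:R^-1.
  split=> [|y s ny sy ds]; first by rewrite invr_gt0 ltr0n.
  rewrite ltNge; apply/negP => he; apply: hn; by exists (y, s).
have [f hf] := choice Hn.
pose s x := match pselect (exists n, (f n).1 = x) with
  | left h => (f (proj1_sig (cid h))).2 | right _ => s0 end.
have sE1 : forall x, s x = s0 \/ exists m, (f m).1 = x /\ s x = (f m).2.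
  move=> x; rewrite /s; case: pselect => [h|h]; last by left.
  by right; case: cid => m hm /=; exists m.
have sE2 : forall n, exists m, (f m).1 = (f n).1 /\ s (f n).1 = (f m).2.
  move=> n; rewrite /s; case: pselect => [h|h]; last by exfalso; apply: h; exists n.
  by case: cid => m hm /=; exists m.
have ssph : forall x, @sphere R d (s x).
  move=> x; case: (sE1 x) => [->//|[m [_ ->]]].
  by have [_ [? _]] := hf m.
have scvg : s x @[x --> +oo] --> s0.
  apply/cvgrPdist_lt => e e0.
  pose N := Num.truncn (e^-1).
  have hN : N.+1%:R^-1 < e.
    rewrite -[ltRHS]invrK ltf_pV2 ?posrE ?ltr0n ?invr_gt0 //.
    exact: truncnS_gt.
  exists (\sum_(k < N) `|(f k).1|); split; first exact: num_real.
  move=> x hx; case: (sE1 x) => [->|[m [hm ->]]]; first by rewrite subrr normr0.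
  have hmN : (N <= m)%N.
    rewrite leqNgt; apply/negP => mN.
    have : `|(f m).1| <= \sum_(k < N) `|(f k).1|.
      rewrite (bigD1 (Ordinal mN)) //= lerDl; exact: sumr_ge0.
    by move=> /(le_trans (ler_norm _)); rewrite hm leNgt hx.
  have [_ [_ [hd _]]] := hf m.
  rewrite distrC; apply: (lt_trans hd); apply: le_lt_trans hN.
  by rewrite lef_pV2 ?posrE ?ltr0n // ler_nat.
have := H s ssph scvg => /cvgrPdist_lt /(_ eps eps0) [M0 [M0r hM0]].
pose n := (Num.truncn `|M0|).+1.
have [m [hm hsm]] := sE2 n.
have [hn _] := hf n.
have hx : M0 < (f n).1.
  apply: le_lt_trans hn; apply: (le_trans (ler_norm _)).
  exact/ltW/truncnS_gt. 
have := hM0 _ hx; rewrite hsm -hm.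
have [_ [_ [_ he]]] := hf m.
by rewrite ltNge he.
Qed.

Theorem lemma2p3 (R : realType) (d : nat) (hd : (1 <= d)%N)
  (dE : measure_display) (E : measurableType dE)
  (dO : measure_display) (Omega : measurableType dO) (P : probability Omega R)
  (eps1 : Omega -> E) (meps1 : measurable_fun setT eps1)
  (Phi : 'rV[R]_d * E -> 'rV[R]_d) (mPhi : measurable_Rd_fun setT Phi)
  (phi : 'rV[R]_d * E -> 'rV[R]_d) (mphi : measurable_Rd_fun (@sphere R d `*` setT) phi)
  (W : set E) :
  (forall (e : E) (s0 : 'rV[R]_d) (s : R -> 'rV[R]_d),
      @sphere R d s0 -> (forall x, @sphere R d (s x)) ->
      s x @[x --> +oo] --> s0 ->
      (x^-1 *: Phi (x *: s x, e)) @[x --> +oo] --> phi (s0, e)) ->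
  ((exists s0 : 'rV[R]_d, @sphere R d s0 /\
       (0 < P [set w | phi (s0, eps1 w) = 0%R])%E) ->
     [/\ measurable W, P (eps1 @^-1` W) = 1%E &
         forall e, W e -> exists C M : R, forall x : R, M <= x ->
           forall y : 'rV[R]_d, enorm y <= x -> enorm (Phi (y, e)) <= C * x]) ->
  (forall (e : E) (v0 : 'rV[R]_d) (v : R -> 'rV[R]_d),
      v0 != 0 -> v x @[x --> +oo] --> v0 ->
      (x^-1 *: Phi (x *: v x, e)) @[x --> +oo] --> phi_ext phi v0 e) /\
  ((exists s0 : 'rV[R]_d, @sphere R d s0 /\
       (0 < P [set w | phi (s0, eps1 w) = 0%R])%E) ->
   forall (e : E) (v : R -> 'rV[R]_d), W e ->
      v x @[x --> +oo] --> (0 : 'rV[R]_d) ->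
      (x^-1 *: Phi (x *: v x, e)) @[x --> +oo] --> phi_ext phi 0 e).
Proof.
move=> H hyp; split.
- move=> e v0 v hv0 hv.
  rewrite /phi_ext (negbTE hv0).
  have enorm0 : enorm (0 : 'rV[R]_d) = 0.
    by rewrite /enorm big1 ?sqrtr0 // => i _; rewrite mxE expr0n.
  pose r := enorm v0.
  have r0 : 0 < r.
    rewrite lt_neqAle enorm_ge0 andbT eq_sym; apply/negP => /eqP /enorm_eq0 h.
    by move: hv0; rewrite h eqxx.
  pose s0 := r^-1 *: v0.
  have hs0 : @sphere R d s0.
    by rewrite /sphere /= /s0 enormZ ger0_norm ?invr_ge0 ?ltW // mulVf ?gt_eqF.
  have hr : enorm (v x) @[x --> +oo] --> r by exact: enorm_cvg hv.
  have hr2 : \forall x \near +oo, r / 2 < enorm (v x).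
    move: (hr) => /cvgrPdist_lt /(_ (r / 2)); rewrite divr_gt0 // => /(_ isT) h.
    apply: filterS h => x; rewrite ltr_norml => /andP[_ h]; lra.
  pose sf x := if v x == 0 then s0 else (enorm (v x))^-1 *: v x.
  have sfs : forall x, @sphere R d (sf x).
    move=> x; rewrite /sf; case: eqP => [//|/eqP nz].
    rewrite /sphere /= enormZ ger0_norm ?invr_ge0 ?enorm_ge0 // mulVf //.
    by apply/negP => /eqP /enorm_eq0 /eqP; rewrite (negbTE nz).
  have nzv : \forall x \near +oo, v x != 0.
    apply: filterS hr2 => x hx; apply/negP => /eqP vx0.
    by move: hx; rewrite vx0 enorm0 ltNge divr_ge0 ?ltW.
  have sfc : sf x @[x --> +oo] --> s0.
    have E1 : \forall x \near +oo, (enorm (v x))^-1 *: v x = sf x.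
      by apply: filterS nzv => x hx; rewrite /sf (negbTE hx).
    apply: cvg_trans (near_eq_cvg E1) _; apply: cvgZ => //.
    by apply: cvgV => //; rewrite gt_eqF.
  pose g x := (x * enorm (v x))^-1 *: Phi ((x * enorm (v x)) *: sf x, e).
  have gc : g x @[x --> +oo] --> phi (s0, e).
    apply/cvgrPdist_lt => eps eps0.
    have [M [dl [dl0 hU]]] := @unif R d (fun z => Phi (z, e)) (phi (s0, e)) s0
      (fun s => H e s0 s hs0) hs0 eps eps0.
    move: (sfc) => /cvgrPdist_lt /(_ dl dl0) hsf.
    near=> x.
    have hx1 : r / 2 < enorm (v x) by near: x.
    have hx2 : 2 * `|M| / r + 1 < x.
      by near: x; apply: nbhs_pinfty_gt; exact: num_real.
    apply: hU.
    + have hK : (2 * `|M| / r) * r = 2 * `|M| by rewrite mulfVK ?gt_eqF.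
      have hMa : M <= `|M| := ler_norm M.
      have ha : 0 <= `|M| := normr_ge0 M.
      move: hK hMa ha hx1 hx2 r0; set K := 2 * `|M| / r; set a := `|M|.
      set n := enorm (v x); move=> hK' hMa' ha' hx1' hx2' r0'.
      have K0 : 0 <= K by rewrite /K divr_ge0 ?mulr_ge0 // ltW.
      have x0 : 0 < x by lra.
      have p1 : x * (r / 2) < x * n by rewrite ltr_pM2l.
      have p2 : (K + 1) * (r / 2) <= x * (r / 2).
        by rewrite ler_pM2r ?divr_gt0 // ltW.
      nra.
    + exact: sfs.
    + rewrite distrC; near: x; exact: hsf.
  have E2 : \forall x \near +oo, enorm (v x) *: g x = x^-1 *: Phi (x *: v x, e).
    near=> x.
    have nz : v x != 0 by near: x.
    have x0 : 0 < x by near: x; apply: nbhs_pinfty_gt; exact: num_real.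
    have n0 : enorm (v x) != 0.
      by apply/negP => /eqP /enorm_eq0 /eqP; rewrite (negbTE nz).
    rewrite /g /sf (negbTE nz).
    have -> : (x * enorm (v x)) *: ((enorm (v x))^-1 *: v x) = x *: v x.
      by rewrite scalerA mulfK.
    by rewrite scalerA invfM mulrCA mulfV // mulr1.
  exact: cvg_trans (near_eq_cvg E2) (cvgZ hr gc).
- move=> hex e v We hv; rewrite /phi_ext eqxx.
  have [_ _ hW] := hyp hex.
  have [C [M hCM]] := hW e We.
  apply/cvgrPdist_lt => eps eps0.
  pose K := `|C| + 1.
  have K0 : 0 < K by rewrite /K ltr_wpDl.
  pose eta := eps / K.
  have eta0 : 0 < eta by rewrite divr_gt0.
  have dd0 : 0 < eta / (d%:R + 1) by rewrite divr_gt0 // ltr_wpDl.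
  move: (hv) => /cvgrPdist_lt /(_ _ dd0) hv'.
  near=> x.
  have x0 : 0 < x by near: x; apply: nbhs_pinfty_gt; exact: num_real.
  have xM : `|M| / eta < x by near: x; apply: nbhs_pinfty_gt; exact: num_real.
  have hvx : `|0 - v x| < eta / (d%:R + 1) by near: x.
  rewrite sub0r normrN in hvx.
  have en : enorm (v x) <= eta.
    apply: (le_trans (enorm_le_norm _)).
    apply: (@le_trans _ _ (d%:R * (eta / (d%:R + 1)))).
      by apply: ler_wpM2l => //; exact: ltW.
    rewrite mulrA ler_pdivrMr ?ltr_wpDl // mulrC ler_pM2l //; lra.
  have exv : enorm (x *: v x) <= x * eta.
    by rewrite enormZ ger0_norm ?(ltW x0) //; apply: ler_wpM2l => //; exact: ltW.
  have Mx : M <= x * eta.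
    apply: (le_trans (ler_norm M)).
    by rewrite mulrC -ler_pdivrMl // mulrC ltW.
  have hb := hCM (x * eta) Mx (x *: v x) exv.
  rewrite sub0r normrN; apply: (le_lt_trans (norm_le_enorm _)).
  rewrite enormZ ger0_norm ?invr_ge0 ?ltW // -ltr_pdivlMl ?invr_gt0 // invrK.
  have hC : C <= `|C| := ler_norm C.
  have epsE : eps = eta * K by rewrite /eta mulfVK ?gt_eqF.
  move: hb hC epsE x0 eta0; rewrite /K; set PP := enorm _; set c := `|C|.
  move=> hb' hC' epsE' x0' eta0'.
  have xe : 0 < x * eta by rewrite mulr_gt0.
  have hc : C * (x * eta) <= c * (x * eta) by rewrite ler_wpM2r // ltW.
  rewrite epsE'; nra.
Unshelve. all: by end_near.
Qed.
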